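(* Let $F\in Sh^{s,0}_{\Lambda_L}(X)\cap Mod(X)$ be reduced, given by data $(V,\rho,W_s,\rho_s,T_s)$, and let $R$ be the matrix of standard cord values of $\epsilon_F=\epsilon_{(F,f)}$ for a local trivialization $f$. (1) If $\rho(m_s)=\mathrm{id}_V$ for the meridian $m_s$ of $K_s$, then $R_j=0$ for all $j$ with $\{j\}=s$. (2) If $F$ is stable, then $R^i\neq0$ for all $1\le i\le n$.
   Context: $X=\mathbb{R}^3$ or $S^3$, $k$ a field, $(L,L')$ an $r$-component framed oriented link, $L=K_1\sqcup\dots\sqcup K_r$, $\pi_L=\pi_1(X\setminus L)$. $L$ is the closure of an $n$-strand braid $B$; a disk $D$ transverse to the braid meets $L$ at $y_1,\dots,y_n$ and the framing at $x_1,\dots,x_n$; strand $i$ lies on component $K_{\{i\}}$. The standard cord $\gamma_{ij}$ is the straight segment in $D$ from $x_i$ to $x_j$; for an augmentation $\epsilon$ of the framed cord algebra, $R$ is the $n\times n$ matrix $R_{ij}=\epsilon(\gamma_{ij})$, with columns $R_j$ and rows $R^i$. Sheaves in $Sh^{s,0}_{\Lambda_L}(X)\cap Mod(X)$ (sheaves of $k$-vector spaces with micro-support at infinity in the unit conormal of $L$, microlocally simple with Morse cone in degree $0$) are equivalent to data $(V,\rho,W_s,\rho_s,T_s)$: $\rho:\pi_L\to GL(V)$ the local system on the complement, $W_s$ the stalk on $K_s$, $T_s:W_s\to V$ injective with one-dimensional cokernel (meridian of $K_s$ acting trivially on its image, longitude compatible with the monodromy of $K_s$); we view $W_s\subset V$;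 stalks at the $x_i$ are identified with $V$ via the standard cords, and $W_i\subset V$ denotes the stalk at $y_i$. $F$ is reduced if it admits no nonzero locally constant subsheaf, no nonzero locally constant quotient, and no direct summand that is the kernel of a surjection from a nonzero locally constant sheaf onto $i'_*k_{L''}$ for a sublink $L''$. With $V_0=\sum_t\mathrm{im}(\mathrm{id}_V-\rho(m_t))$ (sum over meridian generators) and $F_0\subset F$ the subsheaf with data $(V_0,\rho|_{V_0},W_s\cap V_0,\dots)$, $F$ is stable if $\Gamma(X,F)=0$ and $F=F_0$. A local trivialization is a tuple of surjections $f_i:V\to k$ with $\ker f_i\supseteq W_i$; $\epsilon_{(F,f)}(\gamma_{ij})=f_i\circ(\mathrm{id}_V-\rho(m_j))\circ f_j^{-1}$ with $f_j^{-1}$ a right inverse of $f_j$ and $m_j$ the meridian of strand $j$ at $x_j$ (more generally $\epsilon(c_{st})=f_sA_{c_{st}}(\mathrm{id}_V-M_t)f_t^{-1}$, $\epsilon(\lambda_s)=f_sA_{\ell_s}f_s^{-1}$, $\epsilon(\mu_s)=1-f_s(\mathrm{id}_V-M_s)f_s^{-1}$). *)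

(* Defs.v *)
(* Algebraic ("data") model of the sheaves of the paper,
   following the equivalence F <-> (V, rho, W_s, rho_s, T_s) stated in the
   context, with the link group presented through the braid B. *)
From HB Require Import structures.
From mathcomp Require Import all_boot all_order all_algebra.
Set Implicit Arguments. Unset Strict Implicit. Unset Printing Implicit Defensive.
Import GRing.Theory.
Local Open Scope ring_scope.

(* A letter (j, b) is x_j if b = false and x_j^{-1} if b = true. *)
Definition fword := seq (nat * bool).

Definition winv (w : fword) : fword := rev (map (fun p => (p.1, ~~ p.2)) w).

(* A "conjugate generator" (c, l) stands for the element c^{-1} x_l c. *)
Definition conj_word (p : fword * nat) : fword := winv p.1 ++ (p.2, false) :: p.1.

(* Images of the generators under the Artin automorphism of the braid
   generator sigma_a (inv = false) or sigma_a^{-1} (inv = true):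
   sigma_a     : x_a |-> x_a x_{a+1} x_a^{-1},  x_{a+1} |-> x_a
   sigma_a^{-1}: x_a |-> x_{a+1},  x_{a+1} |-> x_{a+1}^{-1} x_a x_{a+1}. *)
Definition sigma_img (a : nat) (inv : bool) (j : nat) : fword * nat :=
  if ~~ inv then
    if j == a then ([:: (a, true)], a.+1)
    else if j == a.+1 then ([::], a)
    else ([::], j)
  else
    if j == a then ([::], a.+1)
    else if j == a.+1 then ([:: (a.+1, false)], a)
    else ([::], j).

Definition subst_word (img : nat -> fword * nat) (w : fword) : fword :=
  flatten (map (fun p => if p.2 then winv (conj_word (img p.1))
                         else conj_word (img p.1)) w).

Definition subst_conj (img : nat -> fword * nat) (p : fword * nat) : fword * nat :=
  let q := img p.2 in (q.1 ++ subst_word img p.1, q.2).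

(* A braid is a word in the Artin generators: (a, false) = sigma_a,
   (a, true) = sigma_a^{-1}.  [braid_img B j] = (c, l) with
   phi_B(x_j) = c^{-1} x_l c. *)
Fixpoint braid_img (B : seq (nat * bool)) (j : nat) : fword * nat :=
  match B with
  | [::] => ([::], j)
  | g :: B' => subst_conj (sigma_img g.1 g.2) (braid_img B' j)
  end.

Definition braid_ok (n : nat) (B : seq (nat * bool)) : bool :=
  all (fun g : nat * bool => (g.1.+1 < n)%N) B.

(* Strand i (at the disk D) continues, after going once through the braid
   and the closure, as strand j. *)
Definition strand_next n (B : seq (nat * bool)) : rel 'I_n :=
  fun i j => (braid_img B i).2 == j.

(* comp i = index of the component K_{\{i\}} containing strand i. *)
Definition component_labeling n r (B : seq (nat * bool)) (comp : 'I_n -> 'I_r) : Prop :=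
  (forall i j : 'I_n, comp i = comp j <-> connect (strand_next B) i j) /\
  (forall s, exists i, comp i = s).

Section Eval.
Variables (k : fieldType) (n d : nat).

Definition extf T (x0 : T) (f : 'I_n -> T) (j : nat) : T :=
  match @insub nat (fun m => (m < n)%N) 'I_n j with Some i => f i | None => x0 end.

Definition eval_word (M : 'I_n -> 'M[k]_d) (w : fword) : 'M[k]_d :=
  foldr (fun p A => (if p.2 then invmx (extf 1%:M M p.1) else extf 1%:M M p.1) *m A)
        1%:M w.

(* Sheaf data (V = k^d, rho, stalks W_i at y_i seen inside V via the
   standard cords).  Linear maps act on row vectors on the right:
   M i = rho(m_i), the meridian of strand i at x_i.
   - rho is a representation of pi_L: the tuple (M i) is fixed by the
     Artin action of B (Wirtinger-type presentation of the closed braid);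
   - W i has codimension one (T injective with 1-dim cokernel);
   - the meridian acts trivially on W i;
   - the stalks along a strand are transported consistently through the
     braid (this also makes the longitude monodromy rho_s well defined as
     the restriction of rho(longitude) to W_s). *)
Definition sheaf_data (B : seq (nat * bool)) (M W : 'I_n -> 'M[k]_d) : Prop :=
  [/\ forall i : 'I_n, M i \in unitmx,
      forall i : 'I_n, let p := braid_img B i in
        M i = invmx (eval_word M p.1) *m extf 1%:M M p.2 *m eval_word M p.1,
      forall i : 'I_n, let p := braid_img B i in
        (W i == extf 0 W p.2 *m eval_word M p.1)%MS,
      forall i : 'I_n, (\rank (W i)).+1 = d
    & forall i : 'I_n, W i *m M i = W i].

(* A nonzero locally constant subsheaf k_X^U -> F (U = k^e.+1): an injective
   linear map U -> V landing in rho-invariants and in every stalk W_i. *)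
Definition has_lc_subsheaf (M W : 'I_n -> 'M[k]_d) : Prop :=
  exists e (phi : 'M[k]_(e.+1, d)),
    [/\ row_free phi, forall i : 'I_n, phi *m M i = phi & forall i : 'I_n, (phi <= W i)%MS].

(* A nonzero locally constant quotient F -> k_X^U: a rho-invariant linear map
   V -> U which is surjective on V and on every stalk W_i. *)
Definition has_lc_quotient (M W : 'I_n -> 'M[k]_d) : Prop :=
  exists e (phi : 'M[k]_(d, e.+1)),
    [/\ forall i : 'I_n, M i *m phi = phi, row_full phi
      & forall i : 'I_n, row_full (W i *m phi)].

(* A direct summand F2 of F (F = F1 (+) F2, i.e. V = V1 (+) V2 with both
   summands rho-stable and W_i = (W_i :&: V1) + (W_i :&: V2)) isomorphic to
   the kernel of a surjection k_X^U -> i'_* k_{L''} (U <> 0): rho acts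
   trivially on V2, its stalk on K_s is a hyperplane of V2 (constant along
   K_s) for K_s in L'' and all of V2 otherwise. *)
Definition has_kernel_summand r (comp : 'I_n -> 'I_r) (M W : 'I_n -> 'M[k]_d) : Prop :=
  exists (L2 : {set 'I_r}) (V1 V2 : 'M[k]_d),
    [/\ (V1 :&: V2 == (0 : 'M[k]_d))%MS, (V1 + V2 == 1%:M)%MS, (0 < \rank V2)%N,
        forall i : 'I_n, (V1 *m M i <= V1)%MS
      & forall i : 'I_n, V2 *m M i = V2] /\
    [/\
     forall i : 'I_n, (W i == (W i :&: V1) + (W i :&: V2))%MS,
        forall i : 'I_n, (if comp i \in L2 then (\rank (W i :&: V2)).+1 = \rank V2
                   else (V2 <= W i)%MS)
      & forall i j : 'I_n, comp i = comp j -> (W i :&: V2 == W j :&: V2)%MS].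

Definition reduced r (comp : 'I_n -> 'I_r) (M W : 'I_n -> 'M[k]_d) : Prop :=
  [/\ ~ has_lc_subsheaf M W, ~ has_lc_quotient M W & ~ has_kernel_summand comp M W].

(* Global sections Gamma(X, F): rho-invariant vectors lying in every stalk. *)
Definition global_sections (M W : 'I_n -> 'M[k]_d) : 'M[k]_d :=
  (\bigcap_i (W i :&: kermx (M i - 1%:M)))%MS.

Definition V0 (M : 'I_n -> 'M[k]_d) : 'M[k]_d := (\sum_i (1%:M - M i))%MS.

Definition stable (M W : 'I_n -> 'M[k]_d) : Prop :=
  (global_sections M W == (0 : 'M[k]_d))%MS /\ (V0 M == 1%:M)%MS.

(* Local trivialization: surjections f_i : V -> k (column vectors,
   v |-> v *m f i) with W_i contained in ker f_i. *)
Definition local_trivialization (W : 'I_n -> 'M[k]_d) (f : 'I_n -> 'cV[k]_d) : Prop :=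
  forall i : 'I_n, f i != 0 /\ W i *m f i = 0.

(* u j is a right inverse f_j^{-1} : k -> V of f_j. *)
Definition right_inverses (f : 'I_n -> 'cV[k]_d) (u : 'I_n -> 'rV[k]_d) : Prop :=
  forall j, u j *m f j = 1%:M.

(* R_ij = eps(gamma_ij) = f_i o (id - rho(m_j)) o f_j^{-1}. *)
Definition cord_matrix (M : 'I_n -> 'M[k]_d) (f : 'I_n -> 'cV[k]_d)
    (u : 'I_n -> 'rV[k]_d) : 'M[k]_n :=
  \matrix_(i, j) (u j *m (1%:M - M j) *m f i) 0 0.

End Eval.

(* Main.v *)
Require Import Defs.
From HB Require Import structures.
From mathcomp Require Import all_boot all_order all_algebra.
Import GRing.Theory.
Local Open Scope ring_scope.

Lemma extf_ord (T : Type) n (x0 : T) (g : 'I_n -> T) (j : 'I_n) :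
  extf x0 g (nat_of_ord j) = g j.
Proof. by rewrite /extf valK. Qed.

Lemma eval_word_unit (k : fieldType) n d (M : 'I_n -> 'M[k]_d) (w : fword) :
  (forall i, M i \in unitmx) -> eval_word M w \in unitmx.
Proof.
move=> HM; elim: w => [|p w IH] /=; first exact: unitmx1.
rewrite unitmx_mul IH andbT.
have He : extf 1%:M M p.1 \in unitmx.
  rewrite /extf; case: insubP => [i _ _|_]; [exact: HM|exact: unitmx1].
by case: p.2 => //; rewrite unitmx_inv.
Qed.

Theorem proposition4p10 (k : fieldType) (n r d : nat) (B : seq (nat * bool))
    (comp : 'I_n -> 'I_r) (M W : 'I_n -> 'M[k]_d)
    (f : 'I_n -> 'cV[k]_d) (u : 'I_n -> 'rV[k]_d) :
  braid_ok n B ->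
  component_labeling B comp ->
  sheaf_data B M W ->
  reduced comp M W ->
  local_trivialization W f ->
  right_inverses f u ->
  (forall (s : 'I_r) (j0 : 'I_n), comp j0 = s -> M j0 = 1%:M ->
     forall j : 'I_n, comp j = s -> col j (cord_matrix M f u) = 0) /\
  (stable M W -> forall i : 'I_n, row i (cord_matrix M f u) != 0).
Proof.
move=> _ [Hlab _] [HU Hconj HWtr Hrk HWM] _ Hloc Hinv; split.
  move=> s j0 Hj0 HM1 j Hj.
  have Hc : connect (strand_next B) j j0 by apply/Hlab; rewrite Hj Hj0.
  have Mj : M j = 1%:M.
    move: Hc => /connectP [p Hp Hlast].
    clear Hj; elim: p j Hp Hlast => [|a p IH] x /=; first by move=> _ <-.
    move=> /andP [Hxa Hp] Hl.
    have Ma := IH a Hp Hl.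
    rewrite (Hconj x) /=.
    move: Hxa; rewrite /strand_next => /eqP ->.
    rewrite extf_ord Ma mulmx1 mulVmx //.
    exact: eval_word_unit.
  apply/matrixP => a b; rewrite !mxE Mj subrr mulmx0 ?mul0mx ?mxE.
  by apply: big1 => l _; rewrite mxE mul0r.
move=> [_ HV0] i; apply/negP => /eqP Hrow.
have Hent : forall j, u j *m (1%:M - M j) *m f i = 0.
  move=> j; apply/matrixP => a b; rewrite (ord1 a) (ord1 b) mxE.
  by have := congr1 (fun A : 'rV[k]_n => A 0 j) Hrow; rewrite !mxE.
have Hcol : forall j, (1%:M - M j) *m f i = 0.
  move=> j; apply/sub_kermxP.
  have Hfull : (1%:M <= (W j + u j)%MS)%MS.
    apply: submx_full; rewrite -col_leq_rank.
    have Hnot : ~~ (u j <= W j)%MS.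
      apply/negP => Hsub.
      have HWk : (W j <= kermx (f j))%MS by apply/sub_kermxP; case: (Hloc j).
      have := submx_trans Hsub HWk => /sub_kermxP.
      rewrite Hinv => /matrixP /(_ 0 0); rewrite !mxE /= => /eqP.
      by rewrite oner_eq0.
    have Hlt : (W j < (W j + u j)%MS)%MS.
      by rewrite ltmxE addsmxSl /= addsmx_sub submx_refl /=.
    by apply: leq_trans (rank_ltmx Hlt); rewrite (Hrk j).
  have Hm := submxMr (1%:M - M j) Hfull.
  rewrite mul1mx in Hm.
  apply: (submx_trans Hm).
  rewrite addsmxMr addsmx_sub; apply/andP; split.
    by apply/sub_kermxP; rewrite mulmxBr mulmx1 HWM subrr mul0mx.
  by apply/sub_kermxP; rewrite Hent.
have HV0k : (V0 M <= kermx (f i))%MS.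
  by apply/sumsmx_subP => j _; apply/sub_kermxP; apply: Hcol.
have H1 : (1%:M <= V0 M)%MS by move/eqmxP: HV0 => ->; exact: submx_refl.
have := submx_trans H1 HV0k.
move=> /sub_kermxP; rewrite mul1mx => Hf.
by case: (Hloc i); rewrite Hf eqxx.
Qed.
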